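(* Let $G$ be an NCI-hypergraph. Then no two hyperedges of $G$ intersect.
   Context: A simple hypergraph is a pair $G=(V,E)$, $V$ finite, $E\subseteq 2^V$, assumed minimal (no edge properly contains another); $k$-edges with $k\ge 3$ are called hyperedges. The edge ideal $I(G)$ is the squarefree monomial ideal in $k[V]$ ($k$ a field) generated by $\prod_{v\in e}v$, $e\in E$. A nearly complete intersection is a squarefree monomial ideal $I$ that is not a complete intersection such that for every variable $x$ in the support of $I$, the ideal $I(x=1)$ (substituting $x=1$ in the generators) is a complete intersection. $G$ is an NCI-hypergraph if $I(G)$ is a nearly complete intersection. *)

(* Defs.v *)
From mathcomp Require Import all_boot.
Set Implicit Arguments. Unset Strict Implicit. Unset Printing Implicit Defensive.

(* A squarefree monomial ideal in k[V] is recorded by a set of generating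
   squarefree monomials, each monomial \prod_{v in e} v being identified with
   its support e : {set V}.  The empty support is the monomial 1. *)

Definition simple_hypergraph (V : finType) (E : {set {set V}}) : Prop :=
  forall e f, e \in E -> f \in E -> e \subset f -> e = f.

Definition mingens (V : finType) (S : {set {set V}}) : {set {set V}} :=
  [set e in S | [forall f in S, (f \subset e) ==> (f == e)]].

(* generators of I(x=1): substitute x = 1 in each generator *)
Definition subst1 (V : finType) (S : {set {set V}}) (x : V) : {set {set V}} :=
  [set e :\ x | e in S].

Definition supp (V : finType) (S : {set {set V}}) : {set V} :=
  \bigcup_(e in mingens S) e.

(* complete intersection (squarefree monomial ideal): a proper ideal whose
   minimal monomial generators have pairwise disjoint supports, i.e. they form
   a regular sequence.  The unit ideal (1 among generators) is not a CI. *)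
Definition is_CI (V : finType) (S : {set {set V}}) : Prop :=
  set0 \notin S /\
  forall e f, e \in mingens S -> f \in mingens S -> e != f -> [disjoint e & f].

Definition nearly_CI (V : finType) (S : {set {set V}}) : Prop :=
  ~ is_CI S /\ forall x, x \in supp S -> is_CI (subst1 S x).

Definition NCI_hypergraph (V : finType) (E : {set {set V}}) : Prop :=
  simple_hypergraph E /\ nearly_CI E.

Definition hyperedge (V : finType) (E : {set {set V}}) (e : {set V}) : bool :=
  (e \in E) && (3 <= #|e|).

(* Main.v *)
Require Import Defs.
From mathcomp Require Import all_boot.
From mathcomp Require Import zify.
Set Implicit Arguments. Unset Strict Implicit.

Lemma mingens_sub (V : finType) (S : {set {set V}}) (A : {set V}) :
  A \in S -> exists2 m, m \in mingens S & m \subset A.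
Proof.
have [n] := ubnP #|A|; elim: n A => // n IH A leAn AS.
case: (boolP (A \in mingens S)) => [Am|Anm]; first by exists A.
rewrite /mingens inE AS /= in Anm.
move/forallPn: Anm => [f]; rewrite negb_imply => /andP [fS].
rewrite negb_imply => /andP [fA fneq].
have lt : #|f| < #|A| by apply: proper_card; rewrite properEneq fneq fA.
have [m mM mf] := IH f (leq_trans lt leAn) fS.
by exists m => //; apply: subset_trans mf fA.
Qed.

Lemma CI_eq (V : finType) (S : {set {set V}}) m1 m2 y :
  is_CI S -> m1 \in mingens S -> m2 \in mingens S -> y \in m1 -> y \in m2 ->
  m1 = m2.
Proof.
move=> [_ H] h1 h2 y1 y2; apply/eqP; apply/negPn/negP => ne.
have := H _ _ h1 h2 ne; rewrite -setI_eq0 => /eqP I0.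
have : y \in m1 :&: m2 by rewrite inE y1 y2.
by rewrite I0 inE.
Qed.

Lemma minA (V : finType) (E : {set {set V}}) z h :
  simple_hypergraph E -> h \in E -> z \in h -> h :\ z \in mingens (subst1 E z).
Proof.
move=> hE hh zh; rewrite /mingens inE.
have hS : h :\ z \in subst1 E z by rewrite /subst1; apply: imset_f.
rewrite hS /=.
apply/forallP => f'; apply/implyP => /imsetP [g gE ->]; apply/implyP => sub.
have gh : g \subset h.
  apply/subsetP => y yg; case: (eqVneq y z) => [->//|yz].
  have : y \in g :\ z by rewrite !inE yz yg.
  by move/(subsetP sub); rewrite inE => /andP[].
by rewrite (hE _ _ gE hh gh).
Qed.

Lemma inS (V : finType) (E : {set {set V}}) z g :
  g \in E -> g :\ z \in subst1 E z.
Proof. by move=> gE; rewrite /subst1; apply: imset_f. Qed.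

Lemma inS' (V : finType) (E : {set {set V}}) z g :
  g \in E -> z \notin g -> g \in subst1 E z.
Proof.
move=> gE zg; have -> : g = g :\ z.
  by apply/setP => y; rewrite !inE; case: eqP => // ->; rewrite (negbTE zg).
exact: inS.
Qed.

Lemma CI_at (V : finType) (E : {set {set V}}) y g :
  NCI_hypergraph E -> g \in E -> y \in g -> is_CI (subst1 E y).
Proof.
move=> [hE [_ H]] gE yg; apply: H; apply/bigcupP; exists g => //.
rewrite /mingens inE gE /=; apply/forallP => f'; apply/implyP => fE.
by apply/implyP => sub; apply/eqP; apply: hE.
Qed.

Lemma big3 (V : finType) (e : {set V}) x w :
  3 <= #|e| -> exists b, [/\ b \in e, b != x & b != w].
Proof.
move=> h.
have : 0 < #|e :\ x :\ w|.
  move: (cardsD1 x e) (cardsD1 w (e :\ x)) => h1 h2.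
  move: h; rewrite h1 h2; case: (x \in e); case: (w \in e :\ x) => /=; lia.
rewrite card_gt0 => /set0Pn [b].
by rewrite !inE => /and3P [bw bx be]; exists b.
Qed.

Theorem lemma3p2 (V : finType) (E : {set {set V}}) :
  NCI_hypergraph E ->
  forall e f : {set V}, hyperedge E e -> hyperedge E f -> e != f ->
  [disjoint e & f].
Proof.
move=> hN e f /andP [eE e3] /andP [fE f3] nef.
have hE := hN.1.
rewrite -setI_eq0; apply/negPn/negP => /set0Pn [x]; rewrite inE => /andP [xe xf].
have CIx := CI_at hN eE xe.
have mex := minA hE eE xe; have mfx := minA hE fE xf.
have step1 : forall y, y \in e -> y \in f -> y = x.
  move=> y ye yf; apply/eqP; apply/negPn/negP => yx.
  have := CI_eq CIx mex mfx (y := y); rewrite !inE yx ye yf => /(_ erefl erefl) eq.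
  by move/eqP: nef; apply; rewrite -(setD1K xe) -(setD1K xf) eq.
have [w [wf wx _]] := big3 x x f3.
have [b [bf bx bw]] := big3 x w f3.
have we : w \notin e by apply/negP => we; move/eqP: wx; apply; apply: step1.
have be : b \notin e by apply/negP => be; move/eqP: bx; apply; apply: step1.
have CIw := CI_at hN fE wf.
have mfw := minA hE fE wf.
have [m mM me] := mingens_sub (inS' eE we).
have [g gE mdef] : exists2 g, g \in E & m = g :\ w.
  by move: mM; rewrite /mingens inE => /andP [/imsetP [g gE ->] _]; exists g.
have xm : x \notin m.
  apply/negP => xm; have := CI_eq CIw mM mfw xm; rewrite !inE xf andbT eq_sym wx => /(_ erefl) mf.
  have : b \in m by rewrite mf !inE bw bf.
  by move/(subsetP me); rewrite (negbTE be).
have wg : w \in g.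
  apply/negPn/negP => wg.
  have gm : m = g by rewrite mdef; apply/setP => y; rewrite !inE; case: eqP => // ->; rewrite (negbTE wg).
  have ge : g = e by apply: hE => //; rewrite -gm.
  by move: xm; rewrite gm ge xe.
have xg : x \notin g.
  by apply/negP => xg; move: xm; rewrite mdef !inE xg andbT; case: eqP => // xw; move: wx; rewrite xw eqxx.
have gsub : g \subset w |: (e :\ x).
  apply/subsetP => y yg; rewrite !inE; case: (eqVneq y w) => //= yw.
  have ym : y \in m by rewrite mdef !inE yw yg.
  rewrite (subsetP me _ ym) andbT; apply/negP => /eqP yx; move: xg; rewrite -yx yg.
  by [].
have [m' mM' mg] := mingens_sub (inS' gE xg).
have [y ym'] : exists y, y \in m'.
  apply/set0Pn/negP => /eqP m0; have [nS _] := CIx; move: nS; rewrite -m0.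
  by move: mM'; rewrite /mingens inE => /andP [-> _].
have eg : e :\ x \subset g.
  have yg := subsetP mg _ ym'.
  move: (subsetP gsub _ yg); rewrite !inE; case: (eqVneq y w) => /= [yw _|yw yey].
    have := CI_eq CIx mM' mfx ym'; rewrite yw !inE wx wf => /(_ erefl) mf.
    have : b \in m' by rewrite mf !inE bx bf.
    move/(subsetP mg)/(subsetP gsub); rewrite !inE (negbTE bw) (negbTE be) andbF.
    by [].
  have := CI_eq CIx mM' mex ym'; rewrite !inE yey => /(_ erefl) me'.
  by rewrite -me'.
have [z [ze zx _]] := big3 x x e3.
have [a [ae ax az]] := big3 x z e3.
have CIz := CI_at hN eE ze.
have zg : z \in g by apply: (subsetP eg); rewrite !inE zx ze.
have mez := minA hE eE ze; have mgz := minA hE gE zg.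
have := CI_eq CIz mez mgz (y := a); rewrite !inE az ae (subsetP eg a) ?inE ?ax ?ae //.
move=> /(_ erefl erefl) eq.
have : x \in g :\ z by rewrite -eq !inE xe eq_sym zx.
by rewrite inE (negbTE xg) andbF.
Qed.
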